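(* Let $\mathcal C$ be a left autonomous monoidal category and $T$ a bimonad on $\mathcal C$. The following are equivalent: (i) $T$ has a left unary antipode; (ii) $T$ has a left binary antipode; (iii) $T$ is a left Hopf monad. (The analogous statement holds for right autonomous categories, right unary/binary antipodes and right Hopf monads.)
   Context: Monoidal categories are strict. A bimonad on $\mathcal C$ is a monad $(T,\mu,\eta)$ with comonoidal structure $T_2(X,Y)\colon T(X\otimes Y)\to TX\otimes TY$, $T_0\colon T\mathbb 1\to\mathbb 1$ such that $\mu,\eta$ are comonoidal. $T$ is a left Hopf monad if $H^l_{X,Y}=(TX\otimes\mu_Y)T_2(X,TY)\colon T(X\otimes TY)\to TX\otimes TY$ is invertible for all $X,Y$. Left autonomous: every $X$ has a left dual ${}^\vee X$ with $\mathrm{ev}_X\colon{}^\vee X\otimes X\to\mathbb 1$, $\mathrm{coev}_X\colon\mathbb 1\to X\otimes{}^\vee X$; ${}^\vee f$ denotes the dual morphism. Such a category is left closed with $[X,Y]^l=Y\otimes{}^\vee X$, evaluation $\mathrm{ev}^X_Y=Y\otimes\mathrm{ev}_X$, and coevaluation $\mathrm{coev}^X_Y=Y\otimes\mathrm{coev}_X$. A left unary antipode is a natural transformation $\mathfrak s^l_X\colon T({}^\vee TX)\to{}^\vee X$ with $T_0T(\mathrm{ev}_X)T({}^\vee\eta_X\otimes X)=\mathrm{ev}_{TX}(\mathfrak s^l_{TX}T({}^\vee\mu_X)\otimes TX)T_2({}^\vee TX,X)$ and $(\eta_X\otimes{}^\vee X)\mathrm{coev}_XT_0=(\mu_X\otimes\mathfrak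 s^l_X)T_2(TX,{}^\vee TX)T(\mathrm{coev}_{TX})$. A left binary antipode is a natural transformation $s^l_{X,Y}\colon T[TX,Y]^l\to[X,TY]^l$ with (1) $T\big(\mathrm{ev}^X_Y([\eta_X,Y]^l\otimes X)\big)=\mathrm{ev}^{TX}_{TY}\big(s^l_{TX,Y}T[\mu_X,Y]^l\otimes TX\big)T_2([TX,Y]^l,X)$; (2) $[X,TY\otimes\eta_X]^l\,\mathrm{coev}^X_{TY}=[X,(TY\otimes\mu_X)T_2(Y,TX)]^l\,s^l_{X,Y\otimes TX}\,T(\mathrm{coev}^{TX}_Y)$. *)

(* Defs.v *)
(* Categories are encoded "arrows-only": one type of objects, one type of all
   morphisms with domain/codomain maps, and a total composition whose laws are
   only required on composable pairs.  This makes strictness of the monoidal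
   structure an equality of objects, with no transports. *)

Record Category := {
  ob : Type;
  hom : Type;
  dom : hom -> ob;
  cod : hom -> ob;
  idm : ob -> hom;
  comp : hom -> hom -> hom;               (* comp g f = g o f *)
  dom_idm : forall X, dom (idm X) = X;
  cod_idm : forall X, cod (idm X) = X;
  dom_comp : forall g f, dom g = cod f -> dom (comp g f) = dom f;
  cod_comp : forall g f, dom g = cod f -> cod (comp g f) = cod g;
  comp_idl : forall f, comp (idm (cod f)) f = f;
  comp_idr : forall f, comp f (idm (dom f)) = f;
  comp_assoc : forall h g f, dom h = cod g -> dom g = cod f ->
      comp h (comp g f) = comp (comp h g) f }.

Arguments dom {_} _. Arguments cod {_} _. Arguments idm {_} _.
Arguments comp {_} _ _.

Record SMCat := {
  cat :> Category;
  tob : ob cat -> ob cat -> ob cat;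
  thom : hom cat -> hom cat -> hom cat;
  unit_ob : ob cat;
  dom_thom : forall f g, dom (thom f g) = tob (dom f) (dom g);
  cod_thom : forall f g, cod (thom f g) = tob (cod f) (cod g);
  thom_id : forall X Y, thom (idm X) (idm Y) = idm (tob X Y);
  thom_comp : forall g f g' f', dom g = cod f -> dom g' = cod f' ->
      thom (comp g f) (comp g' f') = comp (thom g g') (thom f f');
  tob_assoc : forall X Y Z, tob (tob X Y) Z = tob X (tob Y Z);
  thom_assoc : forall f g h, thom (thom f g) h = thom f (thom g h);
  tob_unitl : forall X, tob unit_ob X = X;
  tob_unitr : forall X, tob X unit_ob = X;
  thom_unitl : forall f, thom (idm unit_ob) f = f;
  thom_unitr : forall f, thom f (idm unit_ob) = f }.

Arguments tob {_} _ _. Arguments thom {_} _ _. Arguments unit_ob {_}.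

Record Functor (C : Category) := {
  Fob : ob C -> ob C;
  Fhom : hom C -> hom C;
  F_dom : forall f, dom (Fhom f) = Fob (dom f);
  F_cod : forall f, cod (Fhom f) = Fob (cod f);
  F_id : forall X, Fhom (idm X) = idm (Fob X);
  F_comp : forall g f, dom g = cod f -> Fhom (comp g f) = comp (Fhom g) (Fhom f) }.

Arguments Fob {_} _ _. Arguments Fhom {_} _ _.

Definition is_hom {C : Category} (f : hom C) (X Y : ob C) : Prop :=
  dom f = X /\ cod f = Y.

Section Defs.
Variable C : SMCat.

Local Notation "g ∘ f" := (comp g f) (at level 41, left associativity).
Local Notation "f ⊗ g" := (thom f g) (at level 31, left associativity).
Local Notation "X ⊠ Y" := (tob X Y) (at level 31, left associativity).
Local Notation "1" := (@unit_ob C).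
Local Notation id := idm.

Record LeftAutonomous := {
  ldual : ob C -> ob C;
  lev : ob C -> hom C;
  lcoev : ob C -> hom C;
  lev_hom : forall X, is_hom (lev X) (ldual X ⊠ X) 1;
  lcoev_hom : forall X, is_hom (lcoev X) 1 (X ⊠ ldual X);
  zigzag1 : forall X, (id X ⊗ lev X) ∘ (lcoev X ⊗ id X) = id X;
  zigzag2 : forall X,
      (lev X ⊗ id (ldual X)) ∘ (id (ldual X) ⊗ lcoev X) = id (ldual X) }.

Variable D : LeftAutonomous.
Local Notation "∨ X" := (ldual D X) (at level 5).
Local Notation ev := (lev D).
Local Notation coev := (lcoev D).

Definition dual_hom (f : hom C) : hom C :=
  (ev (cod f) ⊗ id (∨ (dom f)))
  ∘ (id (∨ (cod f)) ⊗ f ⊗ id (∨ (dom f)))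
  ∘ (id (∨ (cod f)) ⊗ coev (dom f)).

(* left internal hom [X,Y]^l = Y ⊗ ∨X, with its action on morphisms
   [f,g]^l = g ⊗ ∨f : [X,Y] -> [X',Y'] for f : X' -> X, g : Y -> Y' *)
Definition lihom (X Y : ob C) : ob C := Y ⊠ ∨ X.
Definition lihom_map (f g : hom C) : hom C := g ⊗ dual_hom f.
Definition ev_int (X Y : ob C) : hom C := id Y ⊗ ev X.
Definition coev_int (X Y : ob C) : hom C := id Y ⊗ coev X.

End Defs.

Section Bimonads.
Variable C : SMCat.
Local Notation "g ∘ f" := (comp g f) (at level 41, left associativity).
Local Notation "f ⊗ g" := (thom f g) (at level 31, left associativity).
Local Notation "X ⊠ Y" := (tob X Y) (at level 31, left associativity).
Local Notation "1" := (@unit_ob C).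
Local Notation id := idm.

Variable T : Functor C.
Local Notation TO := (Fob T).
Local Notation TH := (Fhom T).

Record is_bimonad (mu eta : ob C -> hom C) (T2 : ob C -> ob C -> hom C)
    (T0 : hom C) : Prop := {
  mu_hom : forall X, is_hom (mu X) (TO (TO X)) (TO X);
  eta_hom : forall X, is_hom (eta X) X (TO X);
  T2_hom : forall X Y, is_hom (T2 X Y) (TO (X ⊠ Y)) (TO X ⊠ TO Y);
  T0_hom : is_hom T0 (TO 1) 1;
  mu_nat : forall f, mu (cod f) ∘ TH (TH f) = TH f ∘ mu (dom f);
  eta_nat : forall f, eta (cod f) ∘ f = TH f ∘ eta (dom f);
  T2_nat : forall f g,
      T2 (cod f) (cod g) ∘ TH (f ⊗ g) = (TH f ⊗ TH g) ∘ T2 (dom f) (dom g);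
  monad_assoc : forall X, mu X ∘ TH (mu X) = mu X ∘ mu (TO X);
  monad_unitl : forall X, mu X ∘ eta (TO X) = id (TO X);
  monad_unitr : forall X, mu X ∘ TH (eta X) = id (TO X);
  comon_coassoc : forall X Y Z,
      (T2 X Y ⊗ id (TO Z)) ∘ T2 (X ⊠ Y) Z = (id (TO X) ⊗ T2 Y Z) ∘ T2 X (Y ⊠ Z);
  comon_counitl : forall X, (T0 ⊗ id (TO X)) ∘ T2 1 X = id (TO X);
  comon_counitr : forall X, (id (TO X) ⊗ T0) ∘ T2 X 1 = id (TO X);
  mu_comon2 : forall X Y,
      T2 X Y ∘ mu (X ⊠ Y) = (mu X ⊗ mu Y) ∘ T2 (TO X) (TO Y) ∘ TH (T2 X Y);
  mu_comon0 : T0 ∘ mu 1 = T0 ∘ TH T0;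
  eta_comon2 : forall X Y, T2 X Y ∘ eta (X ⊠ Y) = eta X ⊗ eta Y;
  eta_comon0 : T0 ∘ eta 1 = id 1 }.

End Bimonads.

Record Bimonad (C : SMCat) := {
  BT : Functor C;
  Bmu : ob C -> hom C;
  Beta : ob C -> hom C;
  BT2 : ob C -> ob C -> hom C;
  BT0 : hom C;
  Bax : is_bimonad C BT Bmu Beta BT2 BT0 }.

Arguments BT {_} _. Arguments Bmu {_} _ _. Arguments Beta {_} _ _.
Arguments BT2 {_} _ _ _. Arguments BT0 {_} _.

Section Antipodes.
Variable C : SMCat.
Variable D : LeftAutonomous C.
Variable B : Bimonad C.
Local Notation "g ∘ f" := (comp g f) (at level 41, left associativity).
Local Notation "f ⊗ g" := (thom f g) (at level 31, left associativity).
Local Notation "X ⊠ Y" := (tob X Y) (at level 31, left associativity).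
Local Notation "1" := (@unit_ob C).
Local Notation id := idm.
Local Notation TO := (Fob (BT B)).
Local Notation TH := (Fhom (BT B)).
Local Notation mu := (Bmu B).
Local Notation eta := (Beta B).
Local Notation T2 := (BT2 B).
Local Notation T0 := (BT0 B).
Local Notation "∨ X" := (ldual C D X) (at level 5).
Local Notation ev := (lev C D).
Local Notation coev := (lcoev C D).
Local Notation dual := (dual_hom C D).
Local Notation "[ X , Y ]" := (lihom C D X Y).
Local Notation lmap := (lihom_map C D).
Local Notation evi := (ev_int C D).
Local Notation coevi := (coev_int C D).

Definition fusion_l (X Y : ob C) : hom C := (id (TO X) ⊗ mu Y) ∘ T2 X (TO Y).

Definition is_left_hopf : Prop :=
  forall X Y, exists g : hom C,
    is_hom g (TO X ⊠ TO Y) (TO (X ⊠ TO Y)) /\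
    g ∘ fusion_l X Y = id (TO (X ⊠ TO Y)) /\
    fusion_l X Y ∘ g = id (TO X ⊠ TO Y).

Definition is_left_unary_antipode (s : ob C -> hom C) : Prop :=
  (forall X, is_hom (s X) (TO (∨ (TO X))) (∨ X)) /\
  (forall f, dual f ∘ s (cod f) = s (dom f) ∘ TH (dual (TH f))) /\
  (forall X,
     T0 ∘ TH (ev X) ∘ TH (dual (eta X) ⊗ id X)
     = ev (TO X) ∘ ((s (TO X) ∘ TH (dual (mu X))) ⊗ id (TO X))
       ∘ T2 (∨ (TO X)) X) /\
  (forall X,
     (eta X ⊗ id (∨ X)) ∘ coev X ∘ T0
     = (mu X ⊗ s X) ∘ T2 (TO X) (∨ (TO X)) ∘ TH (coev (TO X))).

Definition has_left_unary_antipode : Prop :=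
  exists s, is_left_unary_antipode s.

Definition is_left_binary_antipode (s : ob C -> ob C -> hom C) : Prop :=
  (forall X Y, is_hom (s X Y) (TO [TO X, Y]) [X, TO Y]) /\
  (forall f g,   (* f : X' -> X, g : Y -> Y' *)
     s (dom f) (cod g) ∘ TH (lmap (TH f) g) = lmap f (TH g) ∘ s (cod f) (dom g)) /\
  (forall X Y,
     TH (evi X Y ∘ (lmap (eta X) (id Y) ⊗ id X))
     = evi (TO X) (TO Y) ∘ ((s (TO X) Y ∘ TH (lmap (mu X) (id Y))) ⊗ id (TO X))
       ∘ T2 [TO X, Y] X) /\
  (forall X Y,
     lmap (id X) (id (TO Y) ⊗ eta X) ∘ coevi X (TO Y)
     = lmap (id X) ((id (TO Y) ⊗ mu X) ∘ T2 Y (TO X))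
       ∘ s X (Y ⊠ TO X) ∘ TH (coevi (TO X) Y)).

Definition has_left_binary_antipode : Prop :=
  exists s, is_left_binary_antipode s.

End Antipodes.

(* Main.v *)
Require Import Defs.
From Stdlib Require Import Setoid IndefiniteDescription.

Section S.
Variable C : SMCat.
Variable D : LeftAutonomous C.
Variable B : Bimonad C.
Local Notation "g ∘ f" := (comp g f) (at level 41, left associativity).
Local Notation "f ⊗ g" := (thom f g) (at level 31, left associativity).
Local Notation "X ⊠ Y" := (tob X Y) (at level 31, left associativity).
Local Notation "1" := (@unit_ob C).
Local Notation id := idm.
Local Notation TO := (Fob (BT B)).
Local Notation TH := (Fhom (BT B)).
Local Notation mu := (Bmu B).
Local Notation eta := (Beta B).
Local Notation T2 := (BT2 B).
Local Notation T0 := (BT0 B).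
Local Notation "∨ X" := (ldual C D X) (at level 5).
Local Notation ev := (lev C D).
Local Notation coev := (lcoev C D).
Local Notation dual := (dual_hom C D).

Definition mate (W X : ob C) (h : hom C) := (id W ⊗ ev X) ∘ (h ⊗ id X).
Definition unmate (A X : ob C) (k : hom C) := (k ⊗ id (∨X)) ∘ (id A ⊗ coev X).
Lemma ty_comp (g f : hom C) A Bb Bb' Cc : is_hom g Bb' Cc -> is_hom f A Bb -> Bb = Bb' -> is_hom (g ∘ f) A Cc.
Proof. intros [H1 H2] [H3 H4] E; subst. split; [rewrite dom_comp | rewrite cod_comp]; congruence. Qed.
Lemma ty_thom (f g : hom C) A Bb A' B' : is_hom f A Bb -> is_hom g A' B' -> is_hom (f ⊗ g) (A ⊠ A') (Bb ⊠ B').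
Proof. intros [H1 H2] [H3 H4]; split; [rewrite dom_thom | rewrite cod_thom]; congruence. Qed.
Lemma ty_id (X : ob C) : is_hom (id X) X X.
Proof. split; [apply dom_idm | apply cod_idm]. Qed.
Lemma ty_F (f : hom C) A Bb : is_hom f A Bb -> is_hom (TH f) (TO A) (TO Bb).
Proof. intros [H1 H2]; split; [rewrite F_dom | rewrite F_cod]; congruence. Qed.
Lemma ty_conv (f : hom C) A Bb A' B' : is_hom f A' B' -> A' = A -> B' = Bb -> is_hom f A Bb.
Proof. intros H E1 E2; subst; auto. Qed.
Lemma ty_ev X : is_hom (ev X) (∨X ⊠ X) 1. Proof. apply lev_hom. Qed.
Lemma ty_coev X : is_hom (coev X) 1 (X ⊠ ∨X). Proof. apply lcoev_hom. Qed.
Lemma ty_mu X : is_hom (mu X) (TO (TO X)) (TO X). Proof. destruct (Bax C B); auto. Qed.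
Lemma ty_eta X : is_hom (eta X) X (TO X). Proof. destruct (Bax C B); auto. Qed.
Lemma ty_T2 X Y : is_hom (T2 X Y) (TO (X ⊠ Y)) (TO X ⊠ TO Y). Proof. destruct (Bax C B); auto. Qed.
Lemma ty_T0 : is_hom T0 (TO 1) 1. Proof. destruct (Bax C B); auto. Qed.
Ltac objeq := try unfold lihom; repeat match goal with H : cod ?f = _ |- context [cod ?f] => rewrite H | H : dom ?f = _ |- context [dom ?f] => rewrite H end; repeat (rewrite ?tob_assoc, ?tob_unitl, ?tob_unitr); first [reflexivity | congruence].

Ltac tyi0 :=
  lazymatch goal with
  | |- is_hom (comp ?g ?f) _ _ => eapply ty_comp; [tyi0 | tyi0 | objeq]
  | |- is_hom (thom ?f ?g) _ _ => eapply ty_thom; [tyi0 | tyi0]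
  | |- is_hom (idm _) _ _ => eapply ty_id
  | |- is_hom (Fhom _ ?f) _ _ => eapply ty_F; tyi0
  | |- is_hom (lev _ _ _) _ _ => eapply ty_ev
  | |- is_hom (lcoev _ _ _) _ _ => eapply ty_coev
  | |- is_hom (Bmu _ _) _ _ => eapply ty_mu
  | |- is_hom (Beta _ _) _ _ => eapply ty_eta
  | |- is_hom (BT2 _ _ _) _ _ => eapply ty_T2
  | |- is_hom (BT0 _) _ _ => eapply ty_T0
  | |- is_hom (lihom_map _ _ _ _) _ _ => unfold lihom_map; tyi0
  | |- is_hom (unmate _ _ _) _ _ => unfold unmate; tyi0
  | |- is_hom (ev_int _ _ _ _) _ _ => unfold ev_int; tyi0
  | |- is_hom (coev_int _ _ _ _) _ _ => unfold coev_int; tyi0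
  | |- is_hom _ _ _ => first [eassumption |
        match goal with H : forall _, is_hom _ _ _ |- _ => eapply H end |
        match goal with H : forall _ _, is_hom _ _ _ |- _ => eapply H end | (split; reflexivity)]
  end.
Lemma ty_dual0 f : is_hom (dual f) (∨ (cod f)) (∨ (dom f)).
Proof. unfold dual_hom. eapply ty_conv; [tyi0|objeq|objeq]. Qed.
Lemma ty_dual f A Bb : is_hom f A Bb -> is_hom (dual f) (∨Bb) (∨A).
Proof. intros [H1 H2]; subst; apply ty_dual0. Qed.

Lemma ty_mate (h : hom C) A B' W X : is_hom h A B' -> B' = W ⊠ ∨X -> is_hom (mate W X h) (A ⊠ X) W.
Proof. intros Hh E. subst. unfold mate. eapply ty_conv; [tyi0|objeq|objeq]. Qed.
Ltac tyi :=
  lazymatch goal with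
  | |- is_hom (comp ?g ?f) _ _ => eapply ty_comp; [tyi | tyi | objeq]
  | |- is_hom (thom ?f ?g) _ _ => eapply ty_thom; [tyi | tyi]
  | |- is_hom (idm _) _ _ => eapply ty_id
  | |- is_hom (Fhom _ ?f) _ _ => eapply ty_F; tyi
  | |- is_hom (dual_hom _ _ ?f) _ _ => eapply ty_dual; tyi
  | |- is_hom (lev _ _ _) _ _ => eapply ty_ev
  | |- is_hom (lcoev _ _ _) _ _ => eapply ty_coev
  | |- is_hom (Bmu _ _) _ _ => eapply ty_mu
  | |- is_hom (Beta _ _) _ _ => eapply ty_eta
  | |- is_hom (BT2 _ _ _) _ _ => eapply ty_T2
  | |- is_hom (BT0 _) _ _ => eapply ty_T0
  | |- is_hom (lihom_map _ _ _ _) _ _ => unfold lihom_map; tyi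
  | |- is_hom (mate _ _ _) _ _ => eapply ty_mate; [tyi | objeq]
  | |- is_hom (unmate _ _ _) _ _ => unfold unmate; tyi
  | |- is_hom (ev_int _ _ _ _) _ _ => unfold ev_int; tyi
  | |- is_hom (coev_int _ _ _ _) _ _ => unfold coev_int; tyi
  | |- is_hom _ _ _ => first [eassumption |
        match goal with H : forall _, is_hom _ _ _ |- _ => eapply H end |
        match goal with H : forall _ _, is_hom _ _ _ |- _ => eapply H end | (split; reflexivity)]
  end.
Ltac domsimp := repeat match goal with
 | |- context [dom ?t] => let H := fresh in eassert (H : is_hom t _ _) by tyi;
       lazymatch type of H with is_hom _ (dom t) _ => fail | _ => rewrite (proj1 H); clear H end
 | |- context [cod ?t] => let H := fresh in eassert (H : is_hom t _ _) by tyi;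
       lazymatch type of H with is_hom _ _ (cod t) => fail | _ => rewrite (proj2 H); clear H end
 end.
Ltac objeq2 := domsimp; objeq.
Ltac ty := eapply ty_conv; [tyi | objeq2 | objeq2].

Lemma dc_lem (g f : hom C) A Bb Bb' Cc : is_hom g Bb' Cc -> is_hom f A Bb -> Bb = Bb' -> dom g = cod f.
Proof. intros [H1 H2] [H3 H4] E; congruence. Qed.
Lemma dom_lem (f : hom C) A Bb X : is_hom f A Bb -> A = X -> dom f = X.
Proof. intros [H1 H2] E; congruence. Qed.
Lemma cod_lem (f : hom C) A Bb X : is_hom f A Bb -> Bb = X -> cod f = X.
Proof. intros [H1 H2] E; congruence. Qed.

Ltac dc := lazymatch goal with
  | |- dom ?g = cod ?f => eapply dc_lem; [tyi | tyi | objeq]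
  | |- cod ?f = dom ?g => symmetry; eapply dc_lem; [tyi | tyi | objeq]
  | |- dom ?f = _ => eapply dom_lem; [tyi | objeq2]
  | |- cod ?f = _ => eapply cod_lem; [tyi | objeq2]
  | |- is_hom _ _ _ => ty
  end.

Ltac rassoc := repeat (rewrite <- comp_assoc by dc).


Lemma cR (h g f : hom C) : dom h = cod g -> dom g = cod f -> (h ∘ g) ∘ f = h ∘ (g ∘ f).
Proof. intros; symmetry; apply comp_assoc; auto. Qed.
Lemma cL (h g f : hom C) : dom h = cod g -> dom g = cod f -> h ∘ (g ∘ f) = (h ∘ g) ∘ f.
Proof. intros; apply comp_assoc; auto. Qed.
Lemma idl (f : hom C) X : cod f = X -> id X ∘ f = f.
Proof. intros E; subst; apply comp_idl. Qed.
Lemma idr (f : hom C) X : dom f = X -> f ∘ id X = f.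
Proof. intros E; subst; apply comp_idr. Qed.
Lemma tc (g f g' f' : hom C) : dom g = cod f -> dom g' = cod f' ->
  (g ∘ f) ⊗ (g' ∘ f') = (g ⊗ g') ∘ (f ⊗ f').
Proof. intros; apply thom_comp; auto. Qed.
Lemma tid (X Y : ob C) : id X ⊗ id Y = id (X ⊠ Y).
Proof. apply thom_id. Qed.
Lemma Fc (g f : hom C) : dom g = cod f -> TH (g ∘ f) = TH g ∘ TH f.
Proof. intros; apply F_comp; auto. Qed.
Lemma Fi X : TH (id X) = id (TO X).
Proof. apply F_id. Qed.
Lemma tsplit1 (f g : hom C) : f ⊗ g = (f ⊗ id (cod g)) ∘ (id (dom f) ⊗ g).
Proof. rewrite <- tc by dc. rewrite idl by dc. rewrite idr by dc. reflexivity. Qed.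
Lemma tsplit2 (f g : hom C) : f ⊗ g = (id (cod f) ⊗ g) ∘ (f ⊗ id (dom g)).
Proof. rewrite <- tc by dc. rewrite idl by dc. rewrite idr by dc. reflexivity. Qed.
Lemma tswap (f g : hom C) : (f ⊗ id (cod g)) ∘ (id (dom f) ⊗ g) = (id (cod f) ⊗ g) ∘ (f ⊗ id (dom g)).
Proof. rewrite <- tsplit1, <- tsplit2. reflexivity. Qed.

Lemma tcl (g f : hom C) X : dom g = cod f -> (g ∘ f) ⊗ id X = (g ⊗ id X) ∘ (f ⊗ id X).
Proof. intros. rewrite <- tc by dc. rewrite idl by dc. reflexivity. Qed.
Lemma tcr (g f : hom C) X : dom g = cod f -> id X ⊗ (g ∘ f) = (id X ⊗ g) ∘ (id X ⊗ f).
Proof. intros. rewrite <- tc by dc. rewrite idl by dc. reflexivity. Qed.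
Lemma ta (f g h : hom C) : (f ⊗ g) ⊗ h = f ⊗ (g ⊗ h).
Proof. apply thom_assoc. Qed.
Lemma tu1 (f : hom C) : id 1 ⊗ f = f. Proof. apply thom_unitl. Qed.
Lemma tu2 (f : hom C) : f ⊗ id 1 = f. Proof. apply thom_unitr. Qed.

Lemma zig X : (id X ⊗ ev X) ∘ (coev X ⊗ id X) = id X. Proof. apply zigzag1. Qed.
Lemma zag X : (ev X ⊗ id (∨X)) ∘ (id (∨X) ⊗ coev X) = id (∨X). Proof. apply zigzag2. Qed.

Lemma dual_id X : dual (id X) = id (∨X).
Proof.
  unfold dual_hom. rewrite dom_idm, cod_idm, !tid, idr by dc. apply zag.
Qed.


Lemma unitslide (g f : hom C) Y Z : cod f = 1 -> cod g = 1 -> dom g = Y -> dom f = Z ->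
  g ∘ (f ⊗ id Y) = f ∘ (id Z ⊗ g).
Proof.
  intros E1 E2 E3 E4. subst. rewrite <- (tu1 g) at 1. rewrite <- E1, <- tsplit2, tsplit1.
  rewrite E2, tu2. reflexivity.
Qed.
Lemma tswap' (f g : hom C) X X' Y Y' : dom f = X -> cod f = X' -> dom g = Y -> cod g = Y' ->
  (id X' ⊗ g) ∘ (f ⊗ id Y) = (f ⊗ id Y') ∘ (id X ⊗ g).
Proof. intros; subst; symmetry; apply tswap. Qed.

Lemma ev_dual (f : hom C) : ev (dom f) ∘ (dual f ⊗ id (dom f)) = ev (cod f) ∘ (id (∨(cod f)) ⊗ f).
Proof.
  unfold dual_hom. rewrite !tcl by dc. rewrite !ta, !tid. rassoc.
  rewrite (cL (ev (dom f))) by dc. rewrite (unitslide _ _ _ (∨ (cod f) ⊠ cod f)) by dc.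
  rassoc. rewrite <- (tid (∨ (cod f))), ta.
  rewrite (cL (id (∨ (cod f)) ⊗ (id (cod f) ⊗ ev (dom f)))) by dc. rewrite <- tcr by dc.
  rewrite (tswap' f (ev (dom f)) (dom f) (cod f) (∨(dom f) ⊠ dom f) 1) by dc. rewrite tu2.
  rewrite tcr by dc. rassoc. rewrite <- (tcr (id (dom f) ⊗ ev (dom f))) by dc.
  rewrite zig, tid, idr by dc. reflexivity.
Qed.

Lemma unitslide2 (g f : hom C) Y Z : dom f = 1 -> dom g = 1 -> cod f = Y -> cod g = Z ->
  (id Y ⊗ g) ∘ f = (f ⊗ id Z) ∘ g.
Proof.
  intros E1 E2 E3 E4. subst.
  assert (H1: f ⊗ g = (id (cod f) ⊗ g) ∘ (f ⊗ id (dom g))) by apply tsplit2. rewrite E2, tu2 in H1.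
  assert (H2: f ⊗ g = (f ⊗ id (cod g)) ∘ (id (dom f) ⊗ g)) by apply tsplit1. rewrite E1, tu1 in H2.
  congruence.
Qed.

Lemma coev_dual (f : hom C) : (id (cod f) ⊗ dual f) ∘ coev (cod f) = (f ⊗ id (∨(dom f))) ∘ coev (dom f).
Proof.
  unfold dual_hom. rewrite !tcr by dc. rassoc.
  rewrite <- (ta (id (cod f)) (id (∨(cod f))) (coev (dom f))), tid.
  rewrite (unitslide2 (coev (dom f)) (coev (cod f)) _ (dom f ⊠ ∨(dom f))) by dc.
  rewrite !ta, <- (ta (id (cod f)) (id (∨(cod f)))), tid.
  rewrite (cL (id (cod f ⊠ ∨ (cod f)) ⊗ (f ⊗ id ∨ (dom f)))) by dc.
  rewrite (tswap' (coev (cod f)) (f ⊗ id ∨ (dom f)) 1 _ _ (cod f ⊠ ∨ (dom f))) by dc.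
  rewrite tu1, <- (tid (cod f) (∨ (dom f))), <- ta, <- ta.
  rassoc. rewrite (cL (id (cod f) ⊗ ev (cod f) ⊗ id ∨ (dom f))) by dc.
  rewrite <- tcl by dc. rewrite zig, tid, idl by dc. reflexivity.
Qed.


Lemma coev_dual' (f : hom C) A Bb : is_hom f A Bb -> (id Bb ⊗ dual f) ∘ coev Bb = (f ⊗ id (∨A)) ∘ coev A.
Proof. intros [? ?]; subst; apply coev_dual. Qed.
Lemma ev_dual' (f : hom C) A Bb : is_hom f A Bb -> ev A ∘ (dual f ⊗ id A) = ev Bb ∘ (id (∨Bb) ⊗ f).
Proof. intros [? ?]; subst; apply ev_dual. Qed.
Lemma mate_unmate h A W X : is_hom h A (W ⊠ ∨X) -> unmate A X (mate W X h) = h.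
Proof.
  intros Hh. unfold unmate, mate. rewrite tcl by dc. rassoc.
  rewrite (ta h), tid.
  rewrite <- (tswap' h (coev X) A (W ⊠ ∨X) 1 (X ⊠ ∨X)) by dc. rewrite tu2.
  rewrite <- (tid W (∨ X)), !ta. rewrite cL by dc. rewrite <- tcr by dc.
  rewrite zag, tid, idl by dc. reflexivity.
Qed.

Lemma unmate_mate k A W X : is_hom k (A ⊠ X) W -> mate W X (unmate A X k) = k.
Proof.
  intros Hk. unfold unmate, mate. rewrite tcl by dc. rewrite ta, tid.
  rewrite (cL (id W ⊗ ev X)) by dc.
  rewrite (tswap' k (ev X) (A ⊠ X) W (∨X ⊠ X) 1) by dc. rewrite tu2.
  rewrite <- (tid A X), !ta. rassoc. rewrite <- tcr by dc. rewrite zig, tid, idr by dc. reflexivity.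
Qed.

Lemma mate_inj h h' A W X : is_hom h A (W ⊠ ∨X) -> is_hom h' A (W ⊠ ∨X) -> mate W X h = mate W X h' -> h = h'.
Proof. intros H1 H2 E. rewrite <- (mate_unmate h A W X), <- (mate_unmate h' A W X), E; auto. Qed.

Lemma mate_post (g h : hom C) W W' X : is_hom g W W' -> cod h = W ⊠ ∨X ->
  g ∘ mate W X h = mate W' X ((g ⊗ id (∨X)) ∘ h).
Proof.
  intros Hg Hh. unfold mate. rewrite tcl by dc. rewrite cL by dc.
  rewrite <- (tu2 g) at 1. rewrite <- (tswap' g (ev X) W W' (∨X ⊠ X) 1) by dc.
  rewrite ta, tid. rassoc. reflexivity.
Qed.

Lemma mate_pre (h f : hom C) W X : dom h = cod f -> cod h = W ⊠ ∨X -> mate W X h ∘ (f ⊗ id X) = mate W X (h ∘ f).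
Proof. intros E E'. unfold mate. rewrite tcl by dc. rassoc. reflexivity. Qed.

Lemma mate_dual (h u : hom C) A W X' X : is_hom h A (W ⊠ ∨X) -> is_hom u X' X ->
  mate W X' ((id W ⊗ dual u) ∘ h) = mate W X h ∘ (id A ⊗ u).
Proof.
  intros Hh [Hu1 Hu2]. subst. unfold mate. rewrite tcl by dc. rewrite cL by dc.
  rewrite ta, <- tcr by dc. rewrite ev_dual.
  rewrite tcr by dc. rassoc. rewrite <- ta, tid.
  rewrite (tswap' h u A (W ⊠ ∨(cod u)) (dom u) (cod u)) by dc. reflexivity.
Qed.


Lemma dual_comp (g f : hom C) : dom g = cod f -> dual (g ∘ f) = dual f ∘ dual g.
Proof.
  intros E.
  apply (mate_inj _ _ (∨ (cod g)) 1 (dom f)); [ty|ty|].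
  assert (E1: dual (g ∘ f) = (id 1 ⊗ dual (g ∘ f)) ∘ id (∨ (cod g))) by (rewrite tu1, idr by dc; reflexivity).
  assert (E2: dual f ∘ dual g = (id 1 ⊗ dual f) ∘ ((id 1 ⊗ dual g) ∘ id (∨ (cod g))))
    by (rewrite !tu1, idr by dc; reflexivity).
  rewrite E1, E2.
  rewrite (mate_dual _ (g ∘ f) (∨ (cod g)) 1 (dom f) (cod g)) by ty.
  rewrite (mate_dual _ f (∨ (cod g)) 1 (dom f) (cod f)) by ty.
  rewrite (mate_dual _ g (∨ (cod g)) 1 (cod f) (cod g)) by ty.
  rewrite cR by dc. rewrite <- tcr by dc. reflexivity.
Qed.

Lemma tcrc (g f r : hom C) X : dom g = cod f -> cod r = X ⊠ dom f ->
  (id X ⊗ g) ∘ ((id X ⊗ f) ∘ r) = (id X ⊗ (g ∘ f)) ∘ r.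
Proof. intros. rewrite cL by dc. rewrite <- tcr by dc. reflexivity. Qed.
Definition ax := Bax C B.
Lemma T2nat (f g : hom C) A A' Bb B' : is_hom f A A' -> is_hom g Bb B' ->
  T2 A' B' ∘ TH (f ⊗ g) = (TH f ⊗ TH g) ∘ T2 A Bb.
Proof. intros [? ?] [? ?]; subst. apply (T2_nat _ _ _ _ _ _ ax). Qed.
Lemma munat (f : hom C) A A' : is_hom f A A' -> mu A' ∘ TH (TH f) = TH f ∘ mu A.
Proof. intros [? ?]; subst. apply (mu_nat _ _ _ _ _ _ ax). Qed.
Lemma etanat (f : hom C) A A' : is_hom f A A' -> eta A' ∘ f = TH f ∘ eta A.
Proof. intros [? ?]; subst. apply (eta_nat _ _ _ _ _ _ ax). Qed.
Lemma massoc X : mu X ∘ TH (mu X) = mu X ∘ mu (TO X). Proof. apply (monad_assoc _ _ _ _ _ _ ax). Qed.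
Lemma munitl X : mu X ∘ eta (TO X) = id (TO X). Proof. apply (monad_unitl _ _ _ _ _ _ ax). Qed.
Lemma munitr X : mu X ∘ TH (eta X) = id (TO X). Proof. apply (monad_unitr _ _ _ _ _ _ ax). Qed.
Lemma coassoc X Y Z : (T2 X Y ⊗ id (TO Z)) ∘ T2 (X ⊠ Y) Z = (id (TO X) ⊗ T2 Y Z) ∘ T2 X (Y ⊠ Z).
Proof. apply (comon_coassoc _ _ _ _ _ _ ax). Qed.
Lemma counitl X : (T0 ⊗ id (TO X)) ∘ T2 1 X = id (TO X). Proof. apply (comon_counitl _ _ _ _ _ _ ax). Qed.
Lemma counitr X : (id (TO X) ⊗ T0) ∘ T2 X 1 = id (TO X). Proof. apply (comon_counitr _ _ _ _ _ _ ax). Qed.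
Lemma mucomon X Y : T2 X Y ∘ mu (X ⊠ Y) = (mu X ⊗ mu Y) ∘ T2 (TO X) (TO Y) ∘ TH (T2 X Y).
Proof. apply (mu_comon2 _ _ _ _ _ _ ax). Qed.
Lemma etacomon X Y : T2 X Y ∘ eta (X ⊠ Y) = eta X ⊗ eta Y. Proof. apply (eta_comon2 _ _ _ _ _ _ ax). Qed.

Lemma tcc (g f g' f' : hom C) : dom g = cod f -> dom g' = cod f' ->
  (g ⊗ g') ∘ (f ⊗ f') = (g ∘ f) ⊗ (g' ∘ f').
Proof. intros; symmetry; apply tc; auto. Qed.
Lemma tcr' (g f : hom C) X : dom g = cod f -> (id X ⊗ g) ∘ (id X ⊗ f) = id X ⊗ (g ∘ f).
Proof. intros; symmetry; apply tcr; auto. Qed.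
Lemma tcl' (g f : hom C) X : dom g = cod f -> (g ⊗ id X) ∘ (f ⊗ id X) = (g ∘ f) ⊗ id X.
Proof. intros; symmetry; apply tcl; auto. Qed.

Section UB.
Variable s : ob C -> hom C.
Hypothesis Hs : is_left_unary_antipode C D B s.
Definition s2 (X Y : ob C) := (id (TO Y) ⊗ s X) ∘ T2 Y (∨(TO X)).
Lemma sty X : is_hom (s X) (TO (∨ (TO X))) (∨ X). Proof. apply Hs. Qed.
Lemma s2ty X Y : is_hom (s2 X Y) (TO (lihom C D (TO X) Y)) (lihom C D X (TO Y)).
Proof. unfold s2. pose proof sty. ty. Qed.

Lemma s2nat (f g : hom C) : s2 (dom f) (cod g) ∘ TH (lihom_map C D (TH f) g) =
  lihom_map C D f (TH g) ∘ s2 (cod f) (dom g).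
Proof.
  pose proof sty. unfold s2, lihom_map. rassoc.
  rewrite (T2nat g (dual (TH f)) (dom g) (cod g) (∨ (TO (cod f))) (∨ (TO (dom f)))) by ty.
  rewrite cL by dc. rewrite tcc by dc. rewrite idl by dc.
  destruct Hs as [_ [Hn _]]. rewrite <- Hn.
  rewrite cL by dc. rewrite tcc by dc. rewrite idr by dc. reflexivity.
Qed.

Lemma s2ax1 X Y : TH (ev_int C D X Y ∘ (lihom_map C D (eta X) (id Y) ⊗ id X))
     = ev_int C D (TO X) (TO Y) ∘ ((s2 (TO X) Y ∘ TH (lihom_map C D (mu X) (id Y))) ⊗ id (TO X))
       ∘ T2 (lihom C D (TO X) Y) X.
Proof.
  pose proof sty. unfold s2, lihom_map, ev_int, lihom. rassoc.
  rewrite (T2nat (id Y) (dual (mu X)) Y Y (∨ (TO X)) (∨ (TO (TO X)))) by ty. rewrite Fi.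
  rewrite (cL (id (TO Y) ⊗ s (TO X))) by dc. rewrite (tcc (id (TO Y))) by dc. rewrite idl by dc.
  rewrite (tcl (id (TO Y) ⊗ _)) by dc. rassoc. rewrite coassoc.
  rewrite (ta (id (TO Y)) (s (TO X) ∘ _)). rewrite (cL (id (TO Y) ⊗ ev (TO X))) by dc.
  rewrite (tcr' (ev (TO X))) by dc.
  rewrite (cL (id (TO Y) ⊗ _)) by dc. rewrite (tcr' (ev (TO X) ∘ _)) by dc.
  destruct Hs as [_ [_ [Ha1 _]]]. rewrite <- Ha1.
  rewrite (cR T0) by dc. rewrite <- (Fc (ev X)) by dc. rewrite tcr by dc. rassoc.
  rewrite <- (Fi Y). rewrite <- (T2nat (id Y) (ev X ∘ (dual (eta X) ⊗ id X)) Y Y (∨ (TO X) ⊠ X) 1) by ty.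
  rewrite cL by dc. rewrite Fi, counitr. rewrite idl by dc.
  rewrite ta, tcr' by dc. reflexivity.
Qed.

Lemma s2ax2 X Y : lihom_map C D (id X) (id (TO Y) ⊗ eta X) ∘ coev_int C D X (TO Y)
     = lihom_map C D (id X) ((id (TO Y) ⊗ mu X) ∘ T2 Y (TO X))
       ∘ s2 X (Y ⊠ TO X) ∘ TH (coev_int C D (TO X) Y).
Proof.
  pose proof sty. unfold s2, lihom_map, coev_int. rewrite !dual_id. rassoc.
  rewrite (cL (_ ⊗ id (∨ X)) (id _ ⊗ s X)) by dc.
  rewrite <- (tswap' ((id (TO Y) ⊗ mu X) ∘ T2 Y (TO X)) (s X) _ _ (TO (∨ (TO X))) (∨ X)) by dc.
  rassoc. rewrite (cL (_ ⊗ id (TO (∨ (TO X)))) (T2 (Y ⊠ TO X) _)) by dc.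
  rewrite (tcl (id (TO Y) ⊗ mu X)) by dc. rassoc. rewrite (cL (T2 Y (TO X) ⊗ _)) by dc. rewrite coassoc. rassoc.
  rewrite <- (Fi Y). rewrite (T2nat (id Y) (coev (TO X)) Y Y 1 (TO X ⊠ ∨ (TO X))) by ty. rewrite Fi.
  rewrite <- (tid (TO Y) (TO X)), !ta. repeat rewrite tcrc by dc.
  rewrite (tcc (id (TO X))) by dc. rewrite idl, idr by dc.
  destruct Hs as [_ [_ [_ Ha2]]]. rewrite <- Ha2.
  rewrite !tcr by dc. rassoc. rewrite counitr, idr by dc.
  reflexivity.
Qed.
End UB.

Notation Hl := (fusion_l C B).
Lemma ty_H X Y : is_hom (Hl X Y) (TO (X ⊠ TO Y)) (TO X ⊠ TO Y).
Proof. unfold fusion_l. ty. Qed.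

Lemma Hmu X Y : Hl X Y ∘ TH (id X ⊗ mu Y) = (id (TO X) ⊗ mu Y) ∘ Hl X (TO Y).
Proof.
  unfold fusion_l. rassoc. rewrite (T2nat (id X) (mu Y) X X (TO (TO Y)) (TO Y)) by ty. rewrite Fi.
  rewrite cL by dc. rewrite tcc by dc. rewrite idl by dc. rewrite massoc.
  rewrite cL by dc. rewrite tcc by dc. rewrite idl by dc. reflexivity.
Qed.

Lemma mate_coev A X : mate (A ⊠ X) X (id A ⊗ coev X) = id (A ⊠ X).
Proof.
  unfold mate. rewrite <- (tid A X), !ta. rewrite tcc by dc. rewrite idl by dc. rewrite zig. reflexivity.
Qed.

Lemma mate_idt0 (h : hom C) W A X : is_hom h A (1 ⊠ ∨X) -> mate W X (id W ⊗ h) = id W ⊗ mate 1 X h.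
Proof.
  intros Hh. unfold mate. rewrite ta. rewrite tcr' by dc. rewrite tu1. reflexivity.
Qed.
Lemma mate_def W X h : mate W X h = (id W ⊗ ev X) ∘ (h ⊗ id X). Proof. reflexivity. Qed.
Opaque mate.

Section BH.
Variable s : ob C -> ob C -> hom C.
Hypothesis Hs : is_left_binary_antipode C D B s.
Lemma sbty X Y : is_hom (s X Y) (TO (lihom C D (TO X) Y)) (lihom C D X (TO Y)). Proof. apply Hs. Qed.
Lemma sbty' X Y : is_hom (s X Y) (TO (Y ⊠ ∨(TO X))) (TO Y ⊠ ∨X). Proof. apply Hs. Qed.

Lemma snat' (f g : hom C) A A' Bo Bo' : is_hom f A A' -> is_hom g Bo Bo' ->
  s A Bo' ∘ TH (g ⊗ dual (TH f)) = (TH g ⊗ dual f) ∘ s A' Bo.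
Proof. intros [? ?] [? ?]; subst. destruct Hs as [_ [Hn _]]. apply Hn. Qed.
Lemma snat_r (g : hom C) A Bo Bo' : is_hom g Bo Bo' ->
  s A Bo' ∘ TH (g ⊗ id (∨(TO A))) = (TH g ⊗ id (∨ A)) ∘ s A Bo.
Proof. intros Hg. pose proof (snat' (id A) g A A Bo Bo' (ty_id A) Hg) as E. rewrite Fi, !dual_id in E. exact E. Qed.
Lemma snat_l (f : hom C) A A' Bo : is_hom f A A' ->
  s A Bo ∘ TH (id Bo ⊗ dual (TH f)) = (id (TO Bo) ⊗ dual f) ∘ s A' Bo.
Proof. intros Hf. pose proof (snat' f (id Bo) A A' Bo Bo Hf (ty_id Bo)) as E. rewrite Fi in E. exact E. Qed.

Definition gB X Y := s (TO Y) (X ⊠ TO Y) ∘ TH (id (X ⊠ TO Y) ⊗ dual (mu Y)) ∘ TH (id X ⊗ coev (TO Y)).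
Definition GB X Y := mate (TO (X ⊠ TO Y)) (TO Y) (gB X Y).

Lemma gBty X Y : is_hom (gB X Y) (TO X) (TO (X ⊠ TO Y) ⊠ ∨(TO Y)).
Proof. unfold gB. pose proof sbty'. ty. Qed.
Lemma GBty X Y : is_hom (GB X Y) (TO X ⊠ TO Y) (TO (X ⊠ TO Y)).
Proof. unfold GB. pose proof gBty. ty. Qed.

Lemma HG X Y : Hl X Y ∘ GB X Y = id (TO X ⊠ TO Y).
Proof.
  pose proof sbty'. pose proof gBty. pose proof ty_H.
  unfold GB. rewrite (mate_post _ _ (TO (X ⊠ TO Y)) (TO X ⊠ TO Y)) by dc.
  unfold gB. rassoc. rewrite <- (Fc (id (X ⊠ TO Y) ⊗ dual (mu Y))) by dc.
  rewrite <- (tid X (TO Y)), ta, tcr' by dc.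
  rewrite (coev_dual' (mu Y) (TO (TO Y)) (TO Y)) by ty.
  rewrite tcr by dc. rewrite <- ta. rewrite Fc by dc.
  rewrite (cL (s _ _)) by dc. rewrite (snat_r (id X ⊗ mu Y) (TO Y) (X ⊠ TO (TO Y)) (X ⊠ TO Y)) by ty.
  rassoc. rewrite (cL (Hl X Y ⊗ _)) by dc. rewrite tcl' by dc. rewrite Hmu.
  rewrite tcl by dc. rassoc.
  destruct Hs as [_ [_ [_ Hb2]]]. unfold lihom_map, coev_int in Hb2.
  specialize (Hb2 (TO Y) X). rewrite dual_id in Hb2. change ((id (TO X) ⊗ mu (TO Y)) ∘ T2 X (TO (TO Y))) with (Hl X (TO Y)) in Hb2.
  rewrite (cL (Hl X (TO Y) ⊗ _)) by dc. rewrite <- Hb2.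
  rewrite (cL (id (TO X) ⊗ mu Y ⊗ _)) by dc. rewrite tcl' by dc. rewrite tcr' by dc. rewrite munitl, tid, tid, idl by dc.
  apply mate_coev.
Qed.

Lemma GH X Y : GB X Y ∘ Hl X Y = id (TO (X ⊠ TO Y)).
Proof.
  pose proof sbty'. pose proof gBty. pose proof ty_H.
  unfold GB. unfold fusion_l at 1. rewrite cL by dc.
  rewrite <- (mate_dual (gB X Y) (mu Y) (TO X) (TO (X ⊠ TO Y)) (TO (TO Y)) (TO Y)) by ty.
  unfold gB. rassoc. rewrite (cL (id _ ⊗ dual (mu Y))) by dc.
  rewrite <- (snat_l (mu Y) (TO (TO Y)) (TO Y) (X ⊠ TO Y)) by ty.
rewrite (cR (s _ _)) by dc. rewrite (cL (TH (id _ ⊗ dual (TH (mu Y))))) by dc. rewrite <- (Fc (id (X ⊠ TO Y) ⊗ dual (TH (mu Y)))) by dc.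
  rewrite tcr' by dc. rewrite <- dual_comp by dc. rewrite massoc. rewrite dual_comp by dc.
  rewrite <- tcr' by dc. rewrite Fc by dc.
  rewrite (cR (TH (id _ ⊗ dual (mu (TO Y))))) by dc. rewrite (cL (s _ _)) by dc.
  rewrite <- (Fc (id (X ⊠ TO Y) ⊗ dual (mu Y))) by dc.
  rewrite <- mate_pre by dc. rewrite cR by dc.
  rewrite <- (Fi (TO Y)).
  rewrite <- (T2nat ((id (X ⊠ TO Y) ⊗ dual (mu Y)) ∘ (id X ⊗ coev (TO Y))) (id (TO Y)) X
     ((X ⊠ TO Y) ⊠ ∨(TO (TO Y))) (TO Y) (TO Y)) by ty.
  rewrite mate_def. rewrite cL by dc.
  destruct Hs as [_ [_ [Hb1 _]]]. specialize (Hb1 (TO Y) (X ⊠ TO Y)).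
  unfold ev_int, lihom_map, lihom in Hb1. rewrite <- Hb1.
  rewrite <- Fc by dc.
  rewrite (tcl (id _ ⊗ dual (mu Y))) by dc. rassoc.
  rewrite (cL (id _ ⊗ dual (eta (TO Y)) ⊗ _)) by dc. rewrite tcl' by dc. rewrite tcr' by dc.
  rewrite <- dual_comp by dc. rewrite munitl, dual_id, !tid, idl by dc.
  rewrite <- (tid X (TO Y)), !ta. rewrite tcc by dc. rewrite idl by dc. rewrite zig, tid. apply Fi.
Qed.
End BH.

Lemma conj_lem (G' H' k k' G0 H0 : hom C) P P' Q Q' :
  is_hom G' Q' P' -> is_hom H' P' Q' -> is_hom k P P' -> is_hom k' Q Q' -> is_hom G0 Q P -> is_hom H0 P Q ->
  G' ∘ H' = id P' -> H0 ∘ G0 = id Q -> H' ∘ k = k' ∘ H0 -> G' ∘ k' = k ∘ G0.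
Proof.
  intros T1 T2 T3 T4 T5 T6 E1 E2 E3.
  rewrite <- (idr k' Q) by dc. rewrite <- E2. rewrite (cL k') by dc. rewrite <- E3.
  rewrite cL by dc. rewrite cL by dc. rewrite E1. rewrite idl by dc. reflexivity.
Qed.

Lemma T2nat_l (g : hom C) A Bb B' : is_hom g Bb B' -> (id (TO A) ⊗ TH g) ∘ T2 A Bb = T2 A B' ∘ TH (id A ⊗ g).
Proof. intros Hg. rewrite (T2nat (id A) g A A Bb B') by ty. rewrite Fi. reflexivity. Qed.
Section HU.
Hypothesis Hh : is_left_hopf C B.
Definition G X Y := proj1_sig (constructive_indefinite_description _ (Hh X Y)).
Lemma Gspec X Y : is_hom (G X Y) (TO X ⊠ TO Y) (TO (X ⊠ TO Y)) /\
    G X Y ∘ Hl X Y = id (TO (X ⊠ TO Y)) /\ Hl X Y ∘ G X Y = id (TO X ⊠ TO Y).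
Proof. unfold G. destruct (constructive_indefinite_description _ (Hh X Y)) as [g Hg]. exact Hg. Qed.
Lemma Gty X Y : is_hom (G X Y) (TO X ⊠ TO Y) (TO (X ⊠ TO Y)). Proof. apply Gspec. Qed.
Lemma GHl X Y : G X Y ∘ Hl X Y = id (TO (X ⊠ TO Y)). Proof. apply Gspec. Qed.
Lemma HlG X Y : Hl X Y ∘ G X Y = id (TO X ⊠ TO Y). Proof. apply Gspec. Qed.

Lemma Hnat1 (f : hom C) A A' Y : is_hom f A A' ->
  Hl A' Y ∘ TH (f ⊗ id (TO Y)) = (TH f ⊗ id (TO Y)) ∘ Hl A Y.
Proof.
  intros Hf. unfold fusion_l. rassoc. rewrite (T2nat f (id (TO Y)) A A' (TO Y) (TO Y)) by ty.
  rewrite Fi. rewrite cL by dc. rewrite tcc by dc. rewrite idl, idr by dc.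
  rewrite cL by dc. rewrite tcc by dc. rewrite idl, idr by dc. reflexivity.
Qed.
Lemma Gnat1 (f : hom C) A A' Y : is_hom f A A' ->
  G A' Y ∘ (TH f ⊗ id (TO Y)) = TH (f ⊗ id (TO Y)) ∘ G A Y.
Proof.
  intros Hf. pose proof Gty. pose proof ty_H.
  apply (conj_lem (G A' Y) (Hl A' Y) _ _ (G A Y) (Hl A Y) (TO (A ⊠ TO Y)) (TO (A' ⊠ TO Y)) (TO A ⊠ TO Y) (TO A' ⊠ TO Y)); [ty|ty|ty|ty|ty|ty|apply GHl|apply HlG|apply Hnat1; auto].
Qed.

Lemma Hnat2 (g : hom C) X Y Y' : is_hom g Y Y' ->
  Hl X Y' ∘ TH (id X ⊗ TH g) = (id (TO X) ⊗ TH g) ∘ Hl X Y.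
Proof.
  intros Hg. unfold fusion_l. rassoc. rewrite (T2nat (id X) (TH g) X X (TO Y) (TO Y')) by ty.
  rewrite Fi. rewrite cL by dc. rewrite tcc by dc. rewrite idl by dc.
  rewrite (munat g Y Y') by ty.
  rewrite cL by dc. rewrite tcc by dc. rewrite idl by dc. reflexivity.
Qed.
Lemma Gnat2 (g : hom C) X Y Y' : is_hom g Y Y' ->
  G X Y' ∘ (id (TO X) ⊗ TH g) = TH (id X ⊗ TH g) ∘ G X Y.
Proof.
  intros Hg. pose proof Gty. pose proof ty_H.
  apply (conj_lem (G X Y') (Hl X Y') _ _ (G X Y) (Hl X Y) (TO (X ⊠ TO Y)) (TO (X ⊠ TO Y')) (TO X ⊠ TO Y) (TO X ⊠ TO Y'));
   [ty|ty|ty|ty|ty|ty|apply GHl|apply HlG|apply Hnat2; auto].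
Qed.
Lemma Gmu X Y : G X Y ∘ (id (TO X) ⊗ mu Y) = TH (id X ⊗ mu Y) ∘ G X (TO Y).
Proof.
  pose proof Gty. pose proof ty_H.
  apply (conj_lem (G X Y) (Hl X Y) _ _ (G X (TO Y)) (Hl X (TO Y)) (TO (X ⊠ TO (TO Y))) (TO (X ⊠ TO Y)) (TO X ⊠ TO (TO Y)) (TO X ⊠ TO Y));
   [ty|ty|ty|ty|ty|ty|apply GHl|apply HlG|apply Hmu].
Qed.
Lemma Heta A X : Hl A X ∘ TH (id A ⊗ eta X) = T2 A X.
Proof.
  unfold fusion_l. rassoc. rewrite (T2nat (id A) (eta X) A A X (TO X)) by ty.
  rewrite Fi. rewrite cL by dc. rewrite tcc by dc. rewrite idl by dc. rewrite munitr, tid, idl by dc. reflexivity.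
Qed.
Lemma Geta A X : G A X ∘ T2 A X = TH (id A ⊗ eta X).
Proof.
  pose proof Gty. pose proof ty_H. rewrite <- Heta. rewrite cL by dc. rewrite GHl, idl by dc. reflexivity.
Qed.
Lemma Hco A Bo Z : (T2 A Bo ⊗ id (TO Z)) ∘ Hl (A ⊠ Bo) Z = (id (TO A) ⊗ Hl Bo Z) ∘ T2 A (Bo ⊠ TO Z).
Proof.
  unfold fusion_l. rewrite (cL (T2 A Bo ⊗ id (TO Z))) by dc. rewrite tcc by dc. rewrite idl, idr by dc.
  rewrite (tsplit2 (T2 A Bo) (mu Z)). rewrite (proj2 (ty_T2 A Bo)), (proj1 (ty_mu Z)).
  rassoc. rewrite coassoc. rewrite <- (tid (TO A) (TO Bo)), ta. rewrite tcrc by dc. reflexivity.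
Qed.
Lemma Gco A Bo Z : (id (TO A) ⊗ G Bo Z) ∘ (T2 A Bo ⊗ id (TO Z)) = T2 A (Bo ⊠ TO Z) ∘ G (A ⊠ Bo) Z.
Proof.
  pose proof Gty. pose proof ty_H.
  apply (conj_lem (id (TO A) ⊗ G Bo Z) (id (TO A) ⊗ Hl Bo Z) _ _ (G (A ⊠ Bo) Z) (Hl (A ⊠ Bo) Z)
     (TO (A ⊠ Bo ⊠ TO Z)) (TO A ⊠ TO (Bo ⊠ TO Z)) (TO (A ⊠ Bo) ⊠ TO Z) (TO A ⊠ (TO Bo ⊠ TO Z)));
   [ty|ty|ty|ty|ty|ty| |apply HlG|symmetry; apply Hco].
  rewrite tcc by dc. rewrite GHl, idl by dc. apply tid.
Qed.
Lemma Gmu1 X : mu X ∘ G 1 X = T0 ⊗ id (TO X).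
Proof.
  pose proof Gty. pose proof ty_H.
  assert (E : (T0 ⊗ id (TO X)) ∘ Hl 1 X = mu X).
  { unfold fusion_l. rewrite cL by dc. rewrite tcc by dc. rewrite idl, idr by dc.
    rewrite tsplit2, (proj2 ty_T0), (proj1 (ty_mu X)), tu1.
    rewrite cR by dc. rewrite counitl. rewrite idr by dc. reflexivity. }
  rewrite <- E. rewrite cR by dc. rewrite HlG, idr by dc. reflexivity.
Qed.

Definition FU X := T0 ∘ TH (ev (TO X)) ∘ G (∨(TO X)) X ∘ (id (TO (∨(TO X))) ⊗ eta X).
Definition sU X := unmate (TO (∨(TO X))) X (FU X).
Lemma FUty X : is_hom (FU X) (TO (∨(TO X)) ⊠ X) 1. Proof. unfold FU. pose proof Gty. ty. Qed.
Lemma sUty X : is_hom (sU X) (TO (∨(TO X))) (∨ X). Proof. unfold sU. pose proof FUty. ty. Qed.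
Lemma mate_sU X : mate 1 X (sU X) = FU X.
Proof. unfold sU. apply unmate_mate. apply FUty. Qed.
Lemma mate1 X h : mate 1 X h = ev X ∘ (h ⊗ id X). Proof. rewrite mate_def, tu1. reflexivity. Qed.

Lemma sUnat (f : hom C) : dual f ∘ sU (cod f) = sU (dom f) ∘ TH (dual (TH f)).
Proof.
  pose proof sUty. pose proof FUty. pose proof Gty.
  apply (mate_inj _ _ (TO (∨ (TO (cod f)))) 1 (dom f)); [ty|ty|].
  rewrite <- (tu1 (dual f)).
  rewrite (mate_dual (sU (cod f)) f (TO (∨ (TO (cod f)))) 1 (dom f) (cod f)) by ty.
  rewrite <- mate_pre by dc. rewrite !mate_sU.
  unfold FU. rassoc.
  rewrite tcr' by dc. rewrite (etanat f (dom f) (cod f)) by ty. rewrite tcr by dc.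
  rewrite (cL (G _ _)) by dc. rewrite (Gnat2 f (∨ (TO (cod f))) (dom f) (cod f)) by ty.
  rassoc. rewrite (cL (TH (ev (TO (cod f))))) by dc. rewrite <- Fc by dc.
  rewrite <- (ev_dual' (TH f) (TO (dom f)) (TO (cod f))) by ty. rewrite Fc by dc. rassoc.
  rewrite (cL (TH (dual (TH f) ⊗ id (TO (dom f))))) by dc.
  rewrite <- (Gnat1 (dual (TH f)) (∨ (TO (cod f))) (∨ (TO (dom f))) (dom f)) by ty.
  rassoc. rewrite (tswap' (TH (dual (TH f))) (eta (dom f)) _ _ (dom f) (TO (dom f))) by ty.
  reflexivity.
Qed.

Lemma sUax1 X : T0 ∘ TH (ev X) ∘ TH (dual (eta X) ⊗ id X)
     = ev (TO X) ∘ ((sU (TO X) ∘ TH (dual (mu X))) ⊗ id (TO X)) ∘ T2 (∨ (TO X)) X.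
Proof.
  pose proof sUty. pose proof FUty. pose proof Gty.
  rewrite <- mate1. rewrite <- mate_pre by dc. rewrite mate_sU. unfold FU. rassoc.
  rewrite (cL (id _ ⊗ eta (TO X))) by dc. rewrite (tswap' (TH (dual (mu X))) (eta (TO X)) _ _ (TO X) (TO (TO X))) by ty.
  rassoc. rewrite (cL (G _ _)) by dc.
  rewrite (Gnat1 (dual (mu X)) (∨ (TO X)) (∨ (TO (TO X))) (TO X)) by ty.
  rassoc. rewrite (cL (TH (ev _))) by dc. rewrite <- (Fc (ev (TO (TO X)))) by dc.
  rewrite (ev_dual' (mu X) (TO (TO X)) (TO X)) by ty. rewrite Fc by dc. rassoc.
  rewrite (cL (TH (id _ ⊗ mu X))) by dc. rewrite <- Gmu.
  rassoc. rewrite (cL (id _ ⊗ mu X)) by dc. rewrite tcr' by dc. rewrite munitl, tid, idl by dc.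
  rewrite Geta. rewrite <- (Fc (ev (TO X))) by dc. rewrite <- (ev_dual' (eta X) X (TO X)) by ty. rewrite Fc by dc.
  rassoc. reflexivity.
Qed.

Lemma sUax2 X : (eta X ⊗ id (∨ X)) ∘ coev X ∘ T0
     = (mu X ⊗ sU X) ∘ T2 (TO X) (∨ (TO X)) ∘ TH (coev (TO X)).
Proof.
  pose proof sUty. pose proof FUty. pose proof Gty.
  apply (mate_inj _ _ (TO 1) (TO X) X); [ty|ty|].
  rewrite <- (mate_pre _ T0) by dc.
  rewrite <- (mate_post (eta X) (coev X) X (TO X) X) by ty.
  rewrite mate_def, zig, idr by dc.
  rewrite <- (mate_pre _ (TH (coev (TO X)))) by dc. rewrite <- (mate_pre _ (T2 (TO X) _)) by dc.
  assert (E : mu X ⊗ sU X = (mu X ⊗ id (∨ X)) ∘ (id (TO (TO X)) ⊗ sU X)).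
  { rewrite tcc by dc. rewrite idl, idr by dc. reflexivity. }
  rewrite E. rewrite <- (mate_post (mu X) _ (TO (TO X)) (TO X) X) by ty.
  rewrite (mate_idt0 (sU X) _ (TO (∨ (TO X))) X) by ty. rewrite mate_sU.
  unfold FU. rewrite !tcr by dc. rassoc.
  rewrite <- (ta (id (TO (TO X))) (id (TO (∨ (TO X)))) (eta X)), tid.
  rewrite (cL (id _ ⊗ eta X)) by dc.
  rewrite (tswap' (T2 (TO X) (∨ (TO X))) (eta X) (TO (TO X ⊠ ∨ (TO X))) _ X (TO X)) by ty.
  rassoc. rewrite (cL (id _ ⊗ G _ _)) by dc. rewrite Gco.
  rassoc.
  rewrite (tswap' (TH (coev (TO X))) (eta X) (TO 1) _ X (TO X)) by ty.
  rassoc. rewrite (cL (G _ _)) by dc. rewrite (Gnat1 (coev (TO X)) 1 (TO X ⊠ ∨ (TO X)) X) by ty.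
  rassoc. rewrite (cL (id _ ⊗ TH (ev (TO X)))) by dc. rewrite (T2nat_l (ev (TO X)) (TO X) (∨ (TO X) ⊠ TO X) 1) by ty.
  rassoc. rewrite (cL (id _ ⊗ T0)) by dc. rewrite counitr. rewrite idl by dc.
  rewrite (cL (TH (id (TO X) ⊗ ev (TO X)))) by dc. rewrite <- Fc by dc. rewrite zig, Fi, idl by dc.
  rewrite cL by dc. rewrite Gmu1. rewrite tcc by dc. rewrite idl, idr by dc.
  rewrite (tsplit2 T0 (eta X)), (proj2 ty_T0), (proj1 (ty_eta X)), tu1. reflexivity.
Qed.
End HU.

Lemma U_to_Bi : has_left_unary_antipode C D B -> has_left_binary_antipode C D B.
Proof.
  intros [su Hsu]. exists (s2 su). split; [|split; [|split]].
  - apply s2ty; auto.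
  - apply s2nat; auto.
  - apply s2ax1; auto.
  - apply s2ax2; auto.
Qed.
Lemma Bi_to_H : has_left_binary_antipode C D B -> is_left_hopf C B.
Proof.
  intros [sb Hsb] X Y. exists (GB sb X Y). split; [apply GBty; auto | split; [apply GH; auto | apply HG; auto]].
Qed.
Lemma H_to_U : is_left_hopf C B -> has_left_unary_antipode C D B.
Proof.
  intros Hh. exists (sU Hh). split; [|split; [|split]].
  - apply sUty.
  - apply sUnat.
  - apply sUax1.
  - apply sUax2.
Qed.
End S.

Theorem mainTheorem8 (C : SMCat) (D : LeftAutonomous C) (B : Bimonad C) :
  (has_left_unary_antipode C D B <-> has_left_binary_antipode C D B) /\
  (has_left_binary_antipode C D B <-> is_left_hopf C B).
Proof.
  split; split.
  - apply (U_to_Bi C D B).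
  - intros H. apply (H_to_U C D B). apply (Bi_to_H C D B). exact H.
  - apply (Bi_to_H C D B).
  - intros H. apply (U_to_Bi C D B). apply (H_to_U C D B). exact H.
Qed.
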